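(* Let $X,Y$ be non-empty subsets of $A^+$. (i) If $XY$ and $YX$ are prefix codes (resp. maximal prefix codes), then $X$ and $Y$ are prefix codes (resp. maximal prefix codes). (ii) If $XY$ and $YX$ are suffix codes (resp. maximal suffix codes), then $X$ and $Y$ are suffix codes (resp. maximal suffix codes). (iii) If $XY$ and $YX$ are bifix codes (resp. thin maximal bifix codes), then $X$ and $Y$ are bifix codes (resp. thin maximal bifix codes).
   Context: $A$ is a finite alphabet, $A^*$ the set of words, $A^+$ the non-empty words, $XY=\{xy:x\in X,y\in Y\}$. A prefix (suffix) code is a subset of $A^+$ in which no word is a proper prefix (suffix) of another; a bifix code is both. A prefix (suffix, bifix) code is maximal if it is not properly contained in another prefix (suffix, bifix) code over $A$. A set $X\subseteq A^*$ is thin if there is a word $w\in A^*$ that is not a factor (infix) of any word of $X$. *)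

(* Defs.v *)
From mathcomp Require Import all_boot.
Set Implicit Arguments. Unset Strict Implicit. Unset Printing Implicit Defensive.

Definition lang (A : finType) := seq A -> Prop.

Definition in_Aplus (A : finType) (X : lang A) : Prop :=
  forall w, X w -> w <> [::].

Definition nonempty_lang (A : finType) (X : lang A) : Prop := exists w, X w.

Definition lcat (A : finType) (X Y : lang A) : lang A :=
  fun w => exists x y, [/\ X x, Y y & w = x ++ y].

Definition lsubset (A : finType) (X Y : lang A) : Prop := forall w, X w -> Y w.

Definition proper_prefix (A : finType) (u v : seq A) : Prop :=
  exists t, t <> [::] /\ v = u ++ t.
Definition proper_suffix (A : finType) (u v : seq A) : Prop :=
  exists t, t <> [::] /\ v = t ++ u.

Definition prefix_code (A : finType) (X : lang A) : Prop :=
  in_Aplus X /\ forall u v, X u -> X v -> ~ proper_prefix u v.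
Definition suffix_code (A : finType) (X : lang A) : Prop :=
  in_Aplus X /\ forall u v, X u -> X v -> ~ proper_suffix u v.
Definition bifix_code (A : finType) (X : lang A) : Prop :=
  prefix_code X /\ suffix_code X.

Definition maximal_in (A : finType) (P : lang A -> Prop) (X : lang A) : Prop :=
  P X /\ forall Z, P Z -> lsubset X Z -> lsubset Z X.

Definition maximal_prefix_code (A : finType) (X : lang A) :=
  maximal_in (@prefix_code A) X.
Definition maximal_suffix_code (A : finType) (X : lang A) :=
  maximal_in (@suffix_code A) X.
Definition maximal_bifix_code (A : finType) (X : lang A) :=
  maximal_in (@bifix_code A) X.

Definition thin (A : finType) (X : lang A) : Prop :=
  exists w : seq A, forall x, X x -> ~ infix w x.

(* Main.v *)
Require Import Defs.
From mathcomp Require Import all_boot.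
Set Implicit Arguments. Unset Strict Implicit.

Section S.
Variable A : finType.
Implicit Types (X Y Z W : lang A) (u v a b t : seq A).

Lemma catl_inj u a b : u ++ a = u ++ b -> a = b.
Proof. by elim: u => //= c u IH [] /IH. Qed.

Lemma cat_cmp u v a b : u ++ a = v ++ b ->
  (exists t, v = u ++ t) \/ (exists t, u = v ++ t).
Proof.
elim: u v => [|c u IH] [|d v] /=.
- by left; exists [::].
- by left; exists (d :: v).
- by right; exists (c :: u).
- case=> -> /IH [[t ->]|[t ->]]; [left|right]; by exists t.
Qed.

Lemma pc_eq X u v a b : prefix_code X -> X u -> X v -> u ++ a = v ++ b ->
  u = v /\ a = b.
Proof.
move=> [_ H] Xu Xv e.
have uv : u = v.
  case: (cat_cmp e) => [[t et]|[t et]]; (case: t et => [|c t] et;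
    [by rewrite et cats0 | exfalso]).
  + by apply: (H u v Xu Xv); exists (c :: t).
  + by apply: (H v u Xv Xu); exists (c :: t).
split=> //; move: e; rewrite uv; exact: catl_inj.
Qed.

Lemma sc_eq X u v a b : suffix_code X -> X u -> X v -> a ++ u = b ++ v ->
  u = v /\ a = b.
Proof.
move=> [_ H] Xu Xv e.
have e' : rev u ++ rev a = rev v ++ rev b by rewrite -!rev_cat e.
have uv : u = v.
  case: (cat_cmp e') => [[t et]|[t et]]; (case: t et => [|c t] et).
  + by rewrite -(revK u) -(revK v) et cats0.
  + exfalso; apply: (H u v Xu Xv); exists (rev (c :: t)); split.
      by rewrite -(revK [::]) => /(can_inj revK).
    by rewrite -(revK v) et rev_cat revK.
  + by rewrite -(revK u) -(revK v) et cats0.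
  + exfalso; apply: (H v u Xv Xu); exists (rev (c :: t)); split.
      by rewrite -(revK [::]) => /(can_inj revK).
    by rewrite -(revK u) et rev_cat revK.
split=> //; move: e'; rewrite uv => /catl_inj e2.
by rewrite -(revK a) -(revK b) e2.
Qed.

Lemma lcat_Aplus X Y : in_Aplus X -> in_Aplus (lcat X Y).
Proof. by move=> H w [x [y [Xx _ ->]]]; case: x Xx => // /H. Qed.

Lemma comp_pre Z W : prefix_code Z -> prefix_code W -> prefix_code (lcat Z W).
Proof.
move=> HZ HW; split; first exact: lcat_Aplus (proj1 HZ).
move=> _ _ [z1 [w1 [Z1 W1 ->]]] [z2 [w2 [Z2 W2 ->]]] [t [tn e]].
rewrite -catA in e.
have [_ e2] := pc_eq HZ Z2 Z1 e.
by apply: (proj2 HW w1 w2 W1 W2); exists t.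
Qed.

Lemma comp_suf Z W : suffix_code Z -> suffix_code W -> suffix_code (lcat Z W).
Proof.
move=> HZ HW; split; first exact: lcat_Aplus (proj1 HZ).
move=> _ _ [z1 [w1 [Z1 W1 ->]]] [z2 [w2 [Z2 W2 ->]]] [t [tn e]].
rewrite catA in e.
have [_ e2] := sc_eq HW W2 W1 e.
by apply: (proj2 HZ z1 z2 Z1 Z2); exists t.
Qed.

Lemma pre_X X Y : nonempty_lang Y -> in_Aplus X -> prefix_code (lcat Y X) ->
  prefix_code X.
Proof.
move=> [y Yy] HX [_ H]; split=> // u v Xu Xv [t [tn e]].
apply: (H (y ++ u) (y ++ v)); [by exists y, u|by exists y, v|].
by exists t; split=> //; rewrite e catA.
Qed.

Lemma pre_Y X Y : nonempty_lang X -> in_Aplus Y -> prefix_code (lcat X Y) ->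
  prefix_code Y.
Proof.
move=> [x Xx] HY [_ H]; split=> // u v Yu Yv [t [tn e]].
apply: (H (x ++ u) (x ++ v)); [by exists x, u|by exists x, v|].
by exists t; split=> //; rewrite e catA.
Qed.

Lemma suf_X X Y : nonempty_lang Y -> in_Aplus X -> suffix_code (lcat X Y) ->
  suffix_code X.
Proof.
move=> [y Yy] HX [_ H]; split=> // u v Xu Xv [t [tn e]].
apply: (H (u ++ y) (v ++ y)); [by exists u, y|by exists v, y|].
by exists t; split=> //; rewrite e catA.
Qed.

Lemma suf_Y X Y : nonempty_lang X -> in_Aplus Y -> suffix_code (lcat Y X) ->
  suffix_code Y.
Proof.
move=> [x Xx] HY [_ H]; split=> // u v Yu Yv [t [tn e]].
apply: (H (u ++ x) (v ++ x)); [by exists u, x|by exists v, x|].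
by exists t; split=> //; rewrite e catA.
Qed.

End S.

Theorem propositionP (A : finType) (X Y : lang A) :
  nonempty_lang X -> nonempty_lang Y -> in_Aplus X -> in_Aplus Y ->
  (prefix_code (lcat X Y) -> prefix_code (lcat Y X) ->
         prefix_code X /\ prefix_code Y) /\
      (maximal_prefix_code (lcat X Y) -> maximal_prefix_code (lcat Y X) ->
         maximal_prefix_code X /\ maximal_prefix_code Y) /\
      (suffix_code (lcat X Y) -> suffix_code (lcat Y X) ->
         suffix_code X /\ suffix_code Y) /\
      (maximal_suffix_code (lcat X Y) -> maximal_suffix_code (lcat Y X) ->
         maximal_suffix_code X /\ maximal_suffix_code Y) /\
      (bifix_code (lcat X Y) -> bifix_code (lcat Y X) ->
         bifix_code X /\ bifix_code Y) /\
      (thin (lcat X Y) -> maximal_bifix_code (lcat X Y) ->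
       thin (lcat Y X) -> maximal_bifix_code (lcat Y X) ->
         (thin X /\ maximal_bifix_code X) /\ (thin Y /\ maximal_bifix_code Y)).
Proof.
move=> neX neY aX aY.
have [x0 Xx0] := neX; have [y0 Yy0] := neY.
split; [|split; [|split; [|split; [|split]]]].
- move=> H1 H2; split; [exact: pre_X H2|exact: pre_Y H1].
- move=> [P1 M1] [P2 M2].
  have pX := pre_X neY aX P2; have pY := pre_Y neX aY P1.
  split; split=> // Z PZ sub z Zz.
  + have : lcat Z Y (z ++ y0) by exists z, y0.
    move/(M1 _ (comp_pre PZ pY)).
    case; first by move=> w [x [y [Xx Yy ->]]]; exists x, y; split=> //; exact: sub.
    move=> x [y [Xx _ e]].
    by have [-> _] := pc_eq PZ Zz (sub _ Xx) e.
  + have : lcat X Z (x0 ++ z) by exists x0, z.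
    move/(M1 _ (comp_pre pX PZ)).
    case; first by move=> w [x [y [Xx Yy ->]]]; exists x, y; split=> //; exact: sub.
    move=> x [y [Xx Yy e]].
    by have [_ ->] := pc_eq pX Xx0 Xx e.
- move=> H1 H2; split; [exact: suf_X H1|exact: suf_Y H2].
- move=> [P1 M1] [P2 M2].
  have sX := suf_X neY aX P1; have sY := suf_Y neX aY P2.
  split; split=> // Z PZ sub z Zz.
  + have : lcat Y Z (y0 ++ z) by exists y0, z.
    move/(M2 _ (comp_suf sY PZ)).
    case; first by move=> w [y [x [Yy Xx ->]]]; exists y, x; split=> //; exact: sub.
    move=> y [x [_ Xx e]].
    by have [-> _] := sc_eq PZ Zz (sub _ Xx) e.
  + have : lcat Z X (z ++ x0) by exists z, x0.
    move/(M2 _ (comp_suf PZ sX)).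
    case; first by move=> w [y [x [Yy Xx ->]]]; exists y, x; split=> //; exact: sub.
    move=> y [x [Yy Xx e]].
    by have [_ ->] := sc_eq sX Xx0 Xx e.
- move=> [P1 S1] [P2 S2].
  split; split; [exact: pre_X P2|exact: suf_X S1|exact: pre_Y P1|exact: suf_Y S2].
- move=> [w Tw] [[P1 S1] M1] _ [[P2 S2] _].
  have pX := pre_X neY aX P2; have pY := pre_Y neX aY P1.
  have sX := suf_X neY aX S1; have sY := suf_Y neX aY S2.
  split; split.
  + exists w => x Xx iw; apply: (Tw (x ++ y0)); first by exists x, y0.
    exact: infix_catr.
  + split; first by split.
    move=> Z [PZ SZ] sub z Zz.
    have : lcat Z Y (z ++ y0) by exists z, y0.
    move/(M1 _ (conj (comp_pre PZ pY) (comp_suf SZ sY))).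
    case; first by move=> v [x [y [Xx Yy ->]]]; exists x, y; split=> //; exact: sub.
    move=> x [y [Xx _ e]].
    by have [-> _] := pc_eq PZ Zz (sub _ Xx) e.
  + exists w => y Yy iw; apply: (Tw (x0 ++ y)); first by exists x0, y.
    exact: infix_catl.
  + split; first by split.
    move=> Z [PZ SZ] sub z Zz.
    have : lcat X Z (x0 ++ z) by exists x0, z.
    move/(M1 _ (conj (comp_pre pX PZ) (comp_suf sX SZ))).
    case; first by move=> v [x [y [Xx Yy ->]]]; exists x, y; split=> //; exact: sub.
    move=> x [y [Xx Yy e]].
    by have [_ ->] := pc_eq pX Xx0 Xx e.
Qed.
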